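(* Let $k\ge3$ and $q=2^{-1/k}$. Then the code $G_k\cdot G_k$, which encodes $(i,j)\in\mathcal{A}$ as the concatenation $G_k(i)G_k(j)$, is not optimal for $\mathrm{TDGD}(q)$.
   Context: $\mathcal{A}=\{(i,j): i,j\in\mathbb{Z}_{\ge 0}\}$; $\mathrm{TDGD}(q)$ is the distribution $P(i,j)=(1-q)^2q^{i+j}$ on $\mathcal{A}$; optimal means minimal expected codeword length among binary prefix codes for $\mathcal{A}$. For $N\ge1$, the quasi-uniform code $Q_N$ on symbols $0,\dots,N-1$ assigns $2^{\lceil\log_2N\rceil}-N$ codewords of length $\lfloor\log_2 N\rfloor$ to the first (smallest) symbols and codewords of length $\lceil\log_2N\rceil$ to the remaining $2N-2^{\lceil\log_2N\rceil}$ symbols. The Golomb code of order $k$ is $G_k(i)=Q_k(i\bmod k)\cdot u(\lfloor i/k\rfloor)$, where $u(n)$ is $n$ ones followed by a zero. *)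

(* Defs.v *)
From Stdlib Require Import Reals Lra Lia Arith List.
Import ListNotations.
Open Scope R_scope.

Definition code2 := nat -> nat -> list bool.

Definition is_prefix (s t : list bool) : Prop := exists u, s ++ u = t.

Definition prefix_code (C : code2) : Prop :=
  forall i j i' j', (i, j) <> (i', j') -> ~ is_prefix (C i j) (C i' j').

Definition tdgd (q : R) (i j : nat) : R := (1 - q) ^ 2 * q ^ (i + j).

Definition partial_exp_len (q : R) (C : code2) (N : nat) : R :=
  fold_right Rplus 0
    (map (fun i => fold_right Rplus 0
       (map (fun j => tdgd q i j * INR (length (C i j))) (seq 0 N))) (seq 0 N)).

(* The expected codeword length of C under TDGD(q) is finite and equals L
   (terms are nonnegative, so square partial sums give the full sum). *)
Definition exp_len (q : R) (C : code2) (L : R) : Prop :=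
  Un_cv (partial_exp_len q C) L.

(* Optimal: a prefix code with finite expected length that is <= the
   expected length of every prefix code (codes of infinite expected length
   are trivially no better). *)
Definition optimal (q : R) (C : code2) : Prop :=
  prefix_code C /\
  exists L, exp_len q C L /\
    forall C' L', prefix_code C' -> exp_len q C' L' -> L <= L'.

Fixpoint bits (w r : nat) : list bool :=
  match w with
  | O => []
  | S w' => Nat.testbit r w' :: bits w' r
  end.

(* quasi-uniform code Q_N on {0,...,N-1}: with c = ceil(log2 N) and
   t = 2^c - N, symbols r < t get the (c-1)-bit word of r, the others the
   c-bit word of r + t (truncated binary code). *)
Definition quasi_uniform (N r : nat) : list bool :=
  let c := Nat.log2_up N in
  let t := (2 ^ c - N)%nat in
  if Nat.ltb r t then bits (Nat.log2 N) r else bits c (r + t).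

Definition unary (n : nat) : list bool := repeat true n ++ [false].

Definition golomb (k i : nat) : list bool :=
  quasi_uniform k (Nat.modulo i k) ++ unary (Nat.div i k).

Definition golomb2 (k : nat) : code2 := fun i j => golomb k i ++ golomb k j.

(* Main.v *)
Require Import Defs.
From Stdlib Require Import Reals Lra Lia Arith List Bool.
Import ListNotations.
Open Scope R_scope.

Lemma bits_len w r : length (bits w r) = w.
Proof. induction w; simpl; auto. Qed.

Lemma len_golomb k i : (0 < k)%nat ->
  length (golomb k i) =
  ((if Nat.ltb (i mod k) (2 ^ Nat.log2_up k - k) then Nat.log2 k else Nat.log2_up k)
   + i / k + 1)%nat.
Proof.
  intros Hk. unfold golomb, quasi_uniform, unary.
  rewrite !length_app, repeat_length. simpl.
  destruct (Nat.ltb _ _); rewrite bits_len; lia.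
Qed.

Lemma witness k : (3 <= k)%nat -> exists i1 j1 i2 j2,
  (i1 + j1 < i2 + j2)%nat /\
  (length (golomb2 k i2 j2) < length (golomb2 k i1 j1))%nat.
Proof.
  intros Hk. unfold golomb2.
  assert (HU := Nat.log2_up_spec k ltac:(lia)).
  assert (HL := Nat.log2_spec k ltac:(lia)).
  assert (HP := Nat.log2_up_pos k ltac:(lia)).
  set (A := Nat.log2 k) in *. set (B := Nat.log2_up k) in *.
  set (t := (2 ^ B - k)%nat).
  assert (Hk0 : (0 < k)%nat) by lia.
  assert (HB : B = S (Nat.pred B)) by lia.
  assert (E2 : (2 ^ B = 2 * 2 ^ Nat.pred B)%nat) by (rewrite HB at 1; simpl; lia).
  assert (AB : (0 < t)%nat -> (A < B)%nat).
  { intros Ht. destruct (Nat.lt_ge_cases A B) as [h|h]; auto.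
    assert (2 ^ B <= 2 ^ A)%nat by (apply Nat.pow_le_mono_r; lia). unfold t in Ht. clearbody A B t; lia. }
  assert (Htk : (t < k)%nat) by (unfold t; lia).
  destruct (Nat.eq_dec t 0) as [T0|T0].
  { exists k, 0%nat, (k-1)%nat, (k-1)%nat. split; [lia|].
    rewrite !length_app, !len_golomb by lia. fold A B t.
    rewrite Nat.Div0.mod_same, Nat.div_same, Nat.Div0.mod_0_l, Nat.Div0.div_0_l by lia.
    rewrite Nat.mod_small, Nat.div_small by lia. rewrite T0. simpl. clearbody A B t; lia. }
  destruct (Nat.eq_dec t 1) as [T1|T1].
  { exists 1%nat, 1%nat, 0%nat, 3%nat. split; [lia|].
    rewrite !length_app, !len_golomb by lia. fold A B t.
    rewrite Nat.Div0.mod_0_l, Nat.Div0.div_0_l, (Nat.mod_small 1), (Nat.div_small 1) by lia.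
    rewrite T1. specialize (AB ltac:(lia)).
    destruct (Nat.eq_dec k 3) as [K3|K3].
    - rewrite K3. simpl. clearbody A B t; lia.
    - rewrite (Nat.mod_small 3), (Nat.div_small 3) by lia. simpl. clearbody A B t; lia. }
  destruct (Nat.eq_dec t 2) as [T2|T2].
  { assert (K5 : (5 < k)%nat).
    { destruct (Nat.lt_ge_cases 5 k); auto.
      assert (k = 3 \/ k = 4 \/ k = 5)%nat as [K|[K|K]] by lia; subst k; vm_compute in T2; discriminate. }
    exists 2%nat, 2%nat, 0%nat, 5%nat. split; [lia|].
    rewrite !length_app, !len_golomb by lia. fold A B t.
    rewrite Nat.Div0.mod_0_l, Nat.Div0.div_0_l, !Nat.mod_small, !Nat.div_small by lia.
    rewrite T2. specialize (AB ltac:(lia)). simpl. clearbody A B t; lia. }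
  exists t, 0%nat, 2%nat, (t-1)%nat. split; [lia|].
  rewrite !length_app, !len_golomb by lia. fold A B t.
  rewrite Nat.Div0.mod_0_l, Nat.Div0.div_0_l, !Nat.mod_small, !Nat.div_small by lia.
  specialize (AB ltac:(lia)).
  rewrite (proj2 (Nat.ltb_lt 0 t)), (proj2 (Nat.ltb_lt 2 t)), (proj2 (Nat.ltb_lt (t-1) t)),
    (proj2 (Nat.ltb_ge t t)) by lia. clearbody A B t; lia.
Qed.

Definition sumR (l : list R) := fold_right Rplus 0 l.

Lemma sumR_plus (A : Type) (f g : A -> R) l :
  sumR (map (fun x => f x + g x) l) = sumR (map f l) + sumR (map g l).
Proof. induction l; simpl; [lra|]. unfold sumR in *; simpl; rewrite IHl; lra. Qed.

Lemma sumR_app l1 l2 : sumR (l1 ++ l2) = sumR l1 + sumR l2.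
Proof. induction l1; simpl; [lra|]. unfold sumR in *; simpl; rewrite IHl1; lra. Qed.

Lemma sum_pt b v N :
  sumR (map (fun j => if j =? b then v else 0) (seq 0 N)) = if b <? N then v else 0.
Proof.
  induction N.
  - simpl. destruct (b <? 0) eqn:E; [apply Nat.ltb_lt in E; lia| reflexivity].
  - rewrite seq_S, map_app, sumR_app, IHN. simpl.
    destruct (Nat.eqb_spec N b), (Nat.ltb_spec b N), (Nat.ltb_spec b (S N)); try lia; lra.
Qed.

Definition dsum N (f : nat -> nat -> R) :=
  sumR (map (fun i => sumR (map (fun j => f i j) (seq 0 N))) (seq 0 N)).

Lemma dsum_plus N f g : dsum N (fun i j => f i j + g i j) = dsum N f + dsum N g.
Proof.
  unfold dsum. rewrite <- sumR_plus. f_equal. apply map_ext. intros i.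
  apply sumR_plus.
Qed.

Definition pt2 a b v (i j : nat) := if i =? a then (if j =? b then v else 0) else 0.

Lemma dsum_pt2 N a b v : (a < N)%nat -> (b < N)%nat -> dsum N (pt2 a b v) = v.
Proof.
  intros Ha Hb. unfold dsum, pt2.
  rewrite (map_ext _ (fun i => if i =? a then v else 0)).
  - rewrite sum_pt. destruct (Nat.ltb_spec a N); lia || reflexivity.
  - intros i. destruct (i =? a).
    + rewrite sum_pt. destruct (Nat.ltb_spec b N); lia || reflexivity.
    + induction (seq 0 N); simpl; auto. unfold sumR in *; simpl; rewrite IHl; lra.
Qed.

Lemma partial_dsum q C N :
  partial_exp_len q C N = dsum N (fun i j => tdgd q i j * INR (length (C i j))).
Proof. reflexivity. Qed.

Definition swapc (C : code2) i1 j1 i2 j2 : code2 := fun i j =>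
  if andb (i =? i1) (j =? j1) then C i2 j2
  else if andb (i =? i2) (j =? j2) then C i1 j1 else C i j.

Lemma swapc_prefix C i1 j1 i2 j2 : prefix_code C -> prefix_code (swapc C i1 j1 i2 j2).
Proof.
  intros HC i j i' j' Hne. unfold swapc.
  destruct (Nat.eqb_spec i i1), (Nat.eqb_spec j j1), (Nat.eqb_spec i i2), (Nat.eqb_spec j j2),
    (Nat.eqb_spec i' i1), (Nat.eqb_spec j' j1), (Nat.eqb_spec i' i2), (Nat.eqb_spec j' j2);
    simpl; subst; apply HC; intro E; inversion E; subst; congruence.
Qed.

Lemma swapc_pointwise q C i1 j1 i2 j2 i j : (i1, j1) <> (i2, j2) ->
  tdgd q i j * INR (length (swapc C i1 j1 i2 j2 i j)) =
  tdgd q i j * INR (length (C i j))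
  + pt2 i1 j1 (tdgd q i1 j1 * (INR (length (C i2 j2)) - INR (length (C i1 j1)))) i j
  + pt2 i2 j2 (tdgd q i2 j2 * (INR (length (C i1 j1)) - INR (length (C i2 j2)))) i j.
Proof.
  intros Hne. unfold swapc, pt2.
  destruct (Nat.eqb_spec i i1), (Nat.eqb_spec j j1), (Nat.eqb_spec i i2), (Nat.eqb_spec j j2);
    simpl; subst; try (exfalso; apply Hne; reflexivity); ring.
Qed.

Lemma dsum_ext N f g : (forall i j, f i j = g i j) -> dsum N f = dsum N g.
Proof.
  intros H. unfold dsum. f_equal. apply map_ext. intros i. f_equal. apply map_ext. auto.
Qed.

Theorem corollary1 (k : nat) (hk : (3 <= k)%nat) :
  ~ optimal (Rpower 2 (- / INR k)) (golomb2 k).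
Proof.
  set (q := Rpower 2 (- / INR k)).
  assert (Hk : 0 < INR k) by (apply lt_0_INR; lia).
  assert (Hq0 : 0 < q) by (unfold q, Rpower; apply exp_pos).
  assert (Hq1 : q < 1).
  { unfold q. rewrite <- (Rpower_O 2) by lra. apply Rpower_lt; [lra|].
    assert (0 < / INR k) by (apply Rinv_0_lt_compat; lra). lra. }
  intros [HC [L [HL Hmin]]].
  destruct (witness k hk) as (i1 & j1 & i2 & j2 & Hs & Hlen).
  assert (Hne : (i1, j1) <> (i2, j2)) by (intro E; inversion E; subst; lia).
  set (G := golomb2 k) in *.
  set (l1 := INR (length (G i1 j1))). set (l2 := INR (length (G i2 j2))).
  set (v1 := tdgd q i1 j1 * (l2 - l1)). set (v2 := tdgd q i2 j2 * (l1 - l2)).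
  assert (Hl : l2 < l1) by (apply lt_INR; exact Hlen).
  assert (Ht : tdgd q i2 j2 < tdgd q i1 j1).
  { unfold tdgd. apply Rmult_lt_compat_l.
    - apply pow_lt. lra.
    - replace (i2 + j2)%nat with (i1 + j1 + (i2 + j2 - (i1 + j1)))%nat by lia.
      rewrite pow_add. rewrite <- (Rmult_1_r (q ^ (i1 + j1))) at 2.
      apply Rmult_lt_compat_l; [apply pow_lt; lra|].
      apply pow_lt_1_compat; [lra|lia]. }
  assert (HD : v1 + v2 < 0).
  { unfold v1, v2. replace (tdgd q i1 j1 * (l2 - l1) + tdgd q i2 j2 * (l1 - l2))
      with ((tdgd q i1 j1 - tdgd q i2 j2) * (l2 - l1)) by ring.
    assert (0 < (tdgd q i1 j1 - tdgd q i2 j2) * (l1 - l2))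
      by (apply Rmult_lt_0_compat; lra). lra. }
  set (C' := swapc G i1 j1 i2 j2).
  assert (Hpart : forall N, (i1 < N)%nat -> (j1 < N)%nat -> (i2 < N)%nat -> (j2 < N)%nat ->
    partial_exp_len q C' N = partial_exp_len q G N + (v1 + v2)).
  { intros N a b c d. rewrite !partial_dsum. unfold C'.
    rewrite (dsum_ext N _ _ (fun i j => swapc_pointwise q G i1 j1 i2 j2 i j Hne)).
    rewrite !dsum_plus. rewrite !dsum_pt2 by assumption. fold l1 l2. fold v1 v2. ring. }
  assert (HL' : exp_len q C' (L + (v1 + v2))).
  { intros eps Heps. destruct (HL eps Heps) as [N0 HN0].
    exists (N0 + i1 + j1 + i2 + j2 + 1)%nat. intros n Hn.
    rewrite Hpart by lia. unfold R_dist.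
    replace (partial_exp_len q G n + (v1 + v2) - (L + (v1 + v2)))
      with (partial_exp_len q G n - L) by ring.
    apply HN0. lia. }
  specialize (Hmin C' _ (swapc_prefix G i1 j1 i2 j2 HC) HL'). lra.
Qed.
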